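(* Let $Q\in\mathbb{R}^{n\times n}$ be symmetric and let $F\in\mathbb{R}^{n\times k}$ have rows $f_1,\dots,f_n$ with $\|f_i\|=1$ for all $i$; put $X=FF^T$. Let $D\in\mathbb{R}^{n\times k}$ have rows $d_1,\dots,d_n$ with $\langle f_i,d_i\rangle=0$ for all $i$. For $t\ge0$ let $F(t)$ be the matrix with rows $(f_i+td_i)/\|f_i+td_i\|$, $X(t)=F(t)F(t)^T$, and \[ \Phi(t)=\frac{2}{\pi}\langle Q,\arcsin X(t)\rangle. \] Then the one-sided directional derivative $G_D=\lim_{t\to0^+}\frac{\Phi(t)-\Phi(0)}{t}$ exists and equals \[ G_D=2\sum_{i<j}Q_{ij}\mu_{ij},\qquad \mu_{ij}=\begin{cases}\dfrac{2}{\pi}\dfrac{\langle f_i,d_j\rangle+\langle f_j,d_i\rangle}{\sqrt{1-X_{ij}^2}}, & X_{ij}\in(-1,1),\\[2ex] \dfrac{2}{\pi}\|d_i+d_j\|, & X_{ij}=-1,\\[1ex] -\dfrac{2}{\pi}\|d_i-d_j\|, & X_{ij}=1.\end{cases} \] Moreover, as a function of $D$ (on the linear subspace $\{D:\langle f_i,d_i\rangle=0\ \forall i\}$), $G_D$ is the sum of a linear function $2\sum_{i<j,\,|X_{ij}|<1}Q_{ij}\mu_{ij}$, a nonpositive concave positively homogeneous function $2\sum_{i<j,\,X_{ij}=\operatorname{sgn}Q_{ij}}Q_{ij}\mu_{ij}$, and a nonnegative convex positively homogeneous function $2\sum_{i<j,\,X_{ij}=-\operatorname{sgn}Q_{ij}}Q_{ij}\mu_{ij}$;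 in particular $D\mapsto G_D$ is a difference of convex functions.
   Context: $\arcsin$ is applied entrywise to matrices (values in $[-\pi/2,\pi/2]$), $\langle A,B\rangle=\sum_{i,j}A_{ij}B_{ij}$ for matrices and the standard inner product for vectors, $\|\cdot\|$ is the Euclidean norm, and $\operatorname{sgn}$ is the sign function (pairs with $Q_{ij}=0$ contribute zero). *)

(* Defs.v *)
From HB Require Import structures.
From mathcomp Require Import all_boot all_order all_algebra.
From mathcomp Require Import all_classical all_reals all_analysis.
Set Implicit Arguments. Unset Strict Implicit. Unset Printing Implicit Defensive.
Import Order.TTheory GRing.Theory Num.Theory.
Local Open Scope ring_scope.

Section Defs.
Variable R : realType.

Definition dotv k (u v : 'rV[R]_k) : R := \sum_(j < k) u 0 j * v 0 j.
Definition enorm k (u : 'rV[R]_k) : R := Num.sqrt (dotv u u).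

Definition frob m n (A B : 'M[R]_(m, n)) : R := \sum_(i < m) \sum_(j < n) A i j * B i j.

Definition asin_mx m n (A : 'M[R]_(m, n)) : 'M[R]_(m, n) := \matrix_(i, j) asin (A i j).

Definition gram n k (F : 'M[R]_(n, k)) : 'M[R]_n := F *m F^T.

Definition Fpath n k (F D : 'M[R]_(n, k)) (t : R) : 'M[R]_(n, k) :=
  \matrix_(i, j) ((F i j + t * D i j) / enorm (row i F + t *: row i D)).

Definition Phi n k (Q : 'M[R]_n) (F D : 'M[R]_(n, k)) (t : R) : R :=
  2 / pi * frob Q (asin_mx (gram (Fpath F D t))).

Definition mu n k (F D : 'M[R]_(n, k)) (i j : 'I_n) : R :=
  let x := gram F i j in
  if (-1 < x < 1) then
    2 / pi * (dotv (row i F) (row j D) + dotv (row j F) (row i D)) / Num.sqrt (1 - x ^+ 2)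
  else if x == -1 then 2 / pi * enorm (row i D + row j D)
  else if x == 1 then - (2 / pi * enorm (row i D - row j D))
  else 0.

Definition Gpart n k (Q : 'M[R]_n) (F : 'M[R]_(n, k)) (P : 'I_n -> 'I_n -> bool)
  (D : 'M[R]_(n, k)) : R :=
  2 * \sum_(i < n) \sum_(j < n | (i < j)%N && P i j) Q i j * mu F D i j.

Definition GD n k (Q : 'M[R]_n) (F D : 'M[R]_(n, k)) : R :=
  Gpart Q F (fun _ _ => true) D.

Definition Glin n k (Q : 'M[R]_n) (F : 'M[R]_(n, k)) :=
  Gpart Q F (fun i j => `|gram F i j| < 1).
Definition Gcav n k (Q : 'M[R]_n) (F : 'M[R]_(n, k)) :=
  Gpart Q F (fun i j => gram F i j == Num.sg (Q i j)).
Definition Gvex n k (Q : 'M[R]_n) (F : 'M[R]_(n, k)) :=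
  Gpart Q F (fun i j => gram F i j == - Num.sg (Q i j)).

Definition tangent n k (F D : 'M[R]_(n, k)) : Prop :=
  forall i : 'I_n, dotv (row i F) (row i D) = 0.

Definition convex_on n k (S : 'M[R]_(n, k) -> Prop) (g : 'M[R]_(n, k) -> R) : Prop :=
  forall D1 D2 (l : R), S D1 -> S D2 -> 0 <= l <= 1 ->
    g (l *: D1 + (1 - l) *: D2) <= l * g D1 + (1 - l) * g D2.

Definition concave_on n k (S : 'M[R]_(n, k) -> Prop) (g : 'M[R]_(n, k) -> R) : Prop :=
  forall D1 D2 (l : R), S D1 -> S D2 -> 0 <= l <= 1 ->
    l * g D1 + (1 - l) * g D2 <= g (l *: D1 + (1 - l) *: D2).

Definition linear_on n k (S : 'M[R]_(n, k) -> Prop) (g : 'M[R]_(n, k) -> R) : Prop :=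
  forall D1 D2 (a b : R), S D1 -> S D2 -> g (a *: D1 + b *: D2) = a * g D1 + b * g D2.

Definition pos_homogeneous_on n k (S : 'M[R]_(n, k) -> Prop) (g : 'M[R]_(n, k) -> R) : Prop :=
  forall D (a : R), S D -> 0 <= a -> g (a *: D) = a * g D.

End Defs.

(* Main.v *)
Require Import Defs.
From HB Require Import structures.
From mathcomp Require Import all_boot all_order all_algebra.
From mathcomp Require Import all_classical all_reals all_analysis.
From mathcomp Require Import ring lra.
Import Order.TTheory GRing.Theory Num.Theory numFieldNormedType.Exports.
Local Open Scope classical_set_scope.
Local Open Scope ring_scope.
Lemma chainL (R : realType) (phi Y V : R -> R) (y0 dphi : R) :
  is_derive y0 1 phi dphi -> (forall t, Y t = y0 + t * V t) ->
  V x @[x --> 0] --> V 0 ->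
  (fun t => (phi (Y t) - phi y0) / t) @ 0^'+ --> dphi * V 0.
Proof.
move=> Hphi HY cV.
have Y0 : Y 0 = y0 by rewrite HY mul0r addr0.
have qY : (fun h : R => h^-1 *: ((Y \o shift 0) (h *: 1) - Y 0)) @ 0^' --> V 0.
  have cV' : V x @[x --> 0^'] --> V 0 by apply: cvg_within_filter.
  apply: cvg_trans cV'; apply: near_eq_cvg; near=> h.
  rewrite /= Y0 HY addr0 [_ *: 1]mulr1 addrC addKr.
  have hn0 : h != 0 by near: h; exact: nbhs_dnbhs_neq.
  by rewrite /GRing.scale /= mulrA mulVf // mul1r.
have dY : derivable Y 0 1 by apply/cvg_ex; exists (V 0).
have DY : 'D_1 Y 0 = V 0.
  by apply: cvg_lim.

have dph : derivable phi (Y 0) 1 by rewrite Y0; case: Hphi.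
have dc : derivable (phi \o Y) 0 1.
  apply/derivable1_diffP; apply: differentiable_comp.
  - exact/derivable1_diffP.
  - exact/derivable1_diffP.
have Dc := derive1_comp dY dph.
rewrite !derive1E DY Y0 (@derive_val _ _ _ _ _ _ _ Hphi) in Dc.
have := dc; rewrite /derivable => /cvg_dnbhs_at_right.
rewrite /derive in Dc. rewrite Dc.
apply: cvg_trans; apply: near_eq_cvg; near=> h.
rewrite /= Y0 addr0 [_ *: 1]mulr1 /GRing.scale /= mulrC.
by [].
Unshelve. all: by end_near. Qed.
Arguments chainL {R phi Y V y0 dphi}.
Lemma asin_half (R : realType) (y : R) : -1 <= y <= 1 ->
  asin y = pi / 2 - (asin (Num.sqrt ((1 - y) / 2))) *+ 2.
Proof.
move=> /andP[y1 y2].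
set s := Num.sqrt _.
have h0 : 0 <= (1 - y) / 2 by apply: divr_ge0; lra.
have s0 : 0 <= s by exact: sqrtr_ge0.
have s2 : s ^+ 2 = (1 - y) / 2 by rewrite sqr_sqrtr.
have s1 : s <= 1.
  rewrite -(sqrtr1 R) /s ler_sqrt; last lra. lra.
have sI : -1 <= s <= 1 by apply/andP; split; lra.
have th1 := asin_geNpi2 sI; have th2 := asin_lepi2 sI.
have sK' : sin (asin s) = s by apply: asinK; rewrite in_itv /= sI.
have th0 : 0 <= asin s.
  rewrite leNgt; apply/negP => hlt.
  have : sin (asin s) < sin 0.
    have pi0 := pi_gt0 R.
    rewrite ltr_sin ?in_itv /=; [lra| |]; apply/andP; split; lra.
  rewrite sK' sin0; lra.
have pi0 := pi_gt0 R.
rewrite -[RHS]sinK.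
  congr asin.
  rewrite sinB sin_pihalf cos_pihalf mul0r subr0 mul1r cos_mulr2n cos2sin2 sK' s2.
  by rewrite mulr2n; field.
rewrite in_itv /=; apply/andP; split; rewrite [asin s *+ 2]mulr2n; lra.
Qed.

Lemma asinN (R : realType) (y : R) : -1 <= y <= 1 -> asin (- y) = - asin y.
Proof.
move=> yI.
have := asin_geNpi2 yI; have := asin_lepi2 yI => h1 h2.
rewrite -{1}(asinK yI) ?in_itv //= -sinN sinK // in_itv /=; apply/andP; split; lra.
Qed.
Arguments asin_half {R y}. Arguments asinN {R y}.
Lemma asin0 (R : realType) : asin (0 : R) = 0.
Proof. by rewrite -{1}sin0 sinK // in_itv /=; have := pi_gt0 R => ?; apply/andP; split; lra. Qed.

Lemma edgeL (R : realType) (Y h : R -> R) :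
  (forall t, 0 < t -> -1 <= Y t <= 1) -> (forall t, 1 - Y t = t ^+ 2 * h t) ->
  h x @[x --> 0] --> h 0 ->
  (fun t => (asin (Y t) - pi / 2) / t) @ 0^'+ --> - (Num.sqrt (h 0 / 2) *+ 2).
Proof.
move=> YI Yh ch.
pose w t := Num.sqrt (h t / 2).
have cw : w x @[x --> 0] --> w 0.
  have := @continuous_cvg _ _ _ _ _ (fun x => h x / 2) Num.sqrt (h 0 / 2) (@sqrt_continuous R _) (cvgMr_tmp (b := 2^-1) ch).
  by rewrite /w; apply.
have da : is_derive (0 : R) 1 asin (Num.sqrt (1 - 0 ^+ 2))^-1.
  apply: is_derive1_asin; apply/andP; split; lra.
have := @chainL R asin (fun t => 0 + t * w t) w 0 _ da (fun t => erefl) cw.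
rewrite expr0n /= subr0 sqrtr1 invr1 mul1r asin0 => H.
have H2 := @cvgMl_tmp _ _ _ _ _ (- 2) _ H.
have E : - 2 * w 0 = - (Num.sqrt (h 0 / 2) *+ 2) by rewrite /w mulNr mulr_natl.
have FF : Filter (0 : R)^'+ by typeclasses eauto.
rewrite -E; move: (H2 FF); apply: cvg_trans; apply: near_eq_cvg; near=> t.
have t0 : 0 < t by near: t; exact: nbhs_right_gt.
rewrite (@asin_half _ _ (YI t t0)) Yh -mulrA sqrtrM ?sqr_ge0 // sqrtr_sqr gtr0_norm // add0r subr0.
rewrite /w; field; lra.
Unshelve. all: by end_near. Qed.
Arguments edgeL {R Y h}.
Section Sc.
Variable R : realType.
Definition gg (p q : R) (t : R) := Num.sqrt (1 + t ^+ 2 * p) * Num.sqrt (1 + t ^+ 2 * q).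

Lemma cvg_poly2 (p : R) : (1 + x ^+ 2 * p) @[x --> (0:R)] --> (1 + 0 ^+ 2 * p).
Proof.
apply: cvgD; first exact: cvg_cst.
apply: cvgMr_tmp.
have := @exprn_continuous R 2 0. by [].
Qed.

Lemma cvg_gg (p q : R) : gg p q x @[x --> 0] --> gg p q 0.
Proof.
rewrite /gg; apply: cvgM.
  exact: (continuous_cvg _ (@sqrt_continuous R _) (cvg_poly2 p)).
exact: (continuous_cvg _ (@sqrt_continuous R _) (cvg_poly2 q)).
Qed.

Lemma gg0 p q : gg p q 0 = 1.
Proof. by rewrite /gg expr0n /= !mul0r addr0 sqrtr1 mulr1. Qed.

Lemma gg_gt0 p q t : 0 <= p -> 0 <= q -> 0 < gg p q t.
Proof.
move=> p0 q0; rewrite /gg; apply: mulr_gt0; rewrite sqrtr_gt0;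
  apply: ltr_pwDl => //; apply: mulr_ge0 => //; exact: sqr_ge0.
Qed.

Lemma gg_sqr p q t : 0 <= p -> 0 <= q ->
  gg p q t ^+ 2 = 1 + t ^+ 2 * (p + q + t ^+ 2 * p * q).
Proof.
move=> p0 q0; rewrite /gg exprMn !sqr_sqrtr; first ring.
all: by apply: addr_ge0 => //; apply: mulr_ge0 => //; exact: sqr_ge0.
Qed.
End Sc.
Arguments gg {R}. Arguments gg_sqr {R}. Arguments gg_gt0 {R}. Arguments gg0 {R}. Arguments cvg_gg {R}. Arguments cvg_poly2 {R}.
Section Sc2.
Variable R : realType.

Lemma cvgP2 (p q : R) : (p + q + x ^+ 2 * p * q) @[x --> (0:R)] --> (p + q + 0 ^+ 2 * p * q).
Proof.
apply: cvgD; first exact: cvg_cst.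
apply: cvgMr_tmp; apply: cvgMr_tmp.
have := @exprn_continuous R 2 0. by [].
Qed.

Lemma cvg_h (p q s : R) : 0 <= p -> 0 <= q ->
  ((p + q + x ^+ 2 * p * q) / (gg p q x + 1) - s) / gg p q x @[x --> (0:R)] -->
  ((p + q + 0 ^+ 2 * p * q) / (gg p q 0 + 1) - s) / gg p q 0.
Proof.
move=> p0 q0.
apply: cvgM; last first.
  apply: cvgV; first by rewrite gt_eqF // gg_gt0.
  exact: cvg_gg.
apply: cvgB; last exact: cvg_cst.
apply: cvgM; first exact: cvgP2.
apply: cvgV; first by rewrite gt_eqF // ltr_wpDl // ?ltr01 // ltW // gg_gt0.
apply: cvgD; [exact: cvg_gg | exact: cvg_cst].
Qed.
End Sc2.
Arguments cvgP2 {R}. Arguments cvg_h {R}.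
Ltac fld := field; repeat (apply/andP; split); try done.
Section Sc3.
Variable R : realType.

Lemma asin1 : asin (1 : R) = pi / 2.
Proof.
by rewrite -[in LHS]sin_pihalf sinK // in_itv /=; have := pi_gt0 R => ?; apply/andP; split; lra.
Qed.

Lemma asinN1 : asin (-1 : R) = - (pi / 2).
Proof. by rewrite asinN ?asin1 //; apply/andP; split; lra. Qed.

Lemma sqrt_half (z : R) : Num.sqrt (z / 2 / 2) *+ 2 = Num.sqrt z.
Proof.
have -> : z / 2 / 2 = (2^-1) ^+ 2 * z by fld.
rewrite sqrtrM ?sqr_ge0 // sqrtr_sqr ger0_norm ?invr_ge0 //.
by rewrite mulr2n; field.
Qed.

Lemma h_id (p q e s t G : R) : 0 < G -> G ^+ 2 = 1 + t ^+ 2 * (p + q + t ^+ 2 * p * q) ->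
  1 - (1 + t ^+ 2 * s * e) / G = t ^+ 2 * (((p + q + t ^+ 2 * p * q) / (G + 1) - s * e) / G).
Proof.
move=> G0 HG.
have G1 : G + 1 != 0 by rewrite gt_eqF // ltr_wpDr // ltW.
have Gn : G != 0 by rewrite gt_eqF.
have k : t ^+ 2 * (p + q + t ^+ 2 * p * q) / (G + 1) = G - 1.
  have -> : t ^+ 2 * (p + q + t ^+ 2 * p * q) = (G - 1) * (G + 1).
    have -> : (G - 1) * (G + 1) = G ^+ 2 - 1 by ring.
    rewrite HG; ring.
  by fld.
have -> : t ^+ 2 * (((p + q + t ^+ 2 * p * q) / (G + 1) - s * e) / G) =
   (t ^+ 2 * (p + q + t ^+ 2 * p * q) / (G + 1) - t ^+ 2 * s * e) / G by fld.
rewrite k; fld.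
Qed.

Lemma scalar_pair (x c e p q : R) (X : R -> R) :
  0 <= p -> 0 <= q ->
  (forall t, X t = (x + t * c + t ^+ 2 * e) / gg p q t) ->
  (forall t, 0 < t -> -1 <= X t <= 1) -> -1 <= x <= 1 ->
  (x = 1 -> c = 0) -> (x = -1 -> c = 0) ->
  (fun t => (asin (X t) - asin x) / t) @ 0^'+ -->
   (if -1 < x < 1 then c / Num.sqrt (1 - x ^+ 2)
    else if x == -1 then Num.sqrt (p + q + 2 * e) else - Num.sqrt (p + q - 2 * e)).
Proof.
move=> p0 q0 HX XI xI c1 cm1.
have G0 t : 0 < gg p q t by exact: gg_gt0.
have Gs t := gg_sqr p q t p0 q0.
case: ifPn => [xin | xnin].
  pose V t := (c + t * e) / gg p q t - x * (t * (p + q + t ^+ 2 * p * q)) / ((gg p q t + 1) * gg p q t).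
  have HY t : X t = x + t * V t.
    rewrite HX /V.
    have G1 : gg p q t + 1 != 0 by rewrite gt_eqF // ltr_wpDr // ltW.
    have Gn : gg p q t != 0 by rewrite gt_eqF.
    have k : t ^+ 2 * (p + q + t ^+ 2 * p * q) = gg p q t ^+ 2 - 1 by rewrite Gs; ring.
    have -> : x + t * ((c + t * e) / gg p q t - x * (t * (p + q + t ^+ 2 * p * q)) / ((gg p q t + 1) * gg p q t))
      = x + (t * c + t ^+ 2 * e) / gg p q t - x * (t ^+ 2 * (p + q + t ^+ 2 * p * q)) / ((gg p q t + 1) * gg p q t) by fld.
    rewrite k; fld.
  have cV : V x @[x --> 0] --> V 0.
    rewrite /V; apply: cvgB.
      apply: cvgM; last by apply: cvgV; [rewrite gt_eqF | exact: cvg_gg].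
      apply: cvgD; first exact: cvg_cst. apply: cvgMr_tmp; exact: cvg_id.
    apply: cvgM.
      apply: cvgMl_tmp; apply: cvgM; first exact: cvg_id. exact: cvgP2.
    apply: cvgV; first by rewrite mulf_neq0 // gt_eqF // ?ltr_wpDr // ltW.
    apply: cvgM; last exact: cvg_gg. apply: cvgD; [exact: cvg_gg | exact: cvg_cst].
  have := chainL (is_derive1_asin xin) HY cV.
  have -> : V 0 = c by rewrite /V gg0 !mul0r addr0 mulr0 mul0r subr0 divr1.
  by rewrite mulrC.
have xe : (x == -1) || (x == 1).
  move: xnin xI; rewrite !lt_neqAle => /negP nx /andP[a b].
  case: (eqVneq x (-1)) => //= h1; case: (eqVneq x 1) => //= h2.
  by exfalso; apply: nx; rewrite eq_sym h1 a h2 b.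
case: ifPn => [/eqP xm1 | xn1].
  have c0 := cm1 xm1.
  pose h t := ((p + q + t ^+ 2 * p * q) / (gg p q t + 1) - (-1) * e) / gg p q t.
  have Yh t : 1 - (- X t) = t ^+ 2 * h t.
    rewrite /h -h_id // HX xm1 c0 mulr0 addr0; field.
    by rewrite gt_eqF.
  have YI t : 0 < t -> -1 <= - X t <= 1.
    by move=> t0; have := XI t t0 => /andP[? ?]; apply/andP; split; lra.
  have := edgeL YI Yh (cvg_h p q (-1 * e) p0 q0).
  move=> H; have FF : Filter (0 : R)^'+ by typeclasses eauto.
  have H2 := cvgN H; move: H2; (try move=> /(_ FF)); rewrite opprK.
  have -> : Num.sqrt (h 0 / 2) *+ 2 = Num.sqrt (p + q + 2 * e).
    rewrite -[RHS]sqrt_half /h gg0 divr1; congr (Num.sqrt _ *+ 2).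
    rewrite expr0n /= !mul0r addr0; fld.
  apply: cvg_trans; apply: near_eq_cvg; near=> t.
  have t0 : 0 < t by near: t; exact: nbhs_right_gt.
  rewrite -[LHS]/(- ((asin (- X t) - pi / 2) / t)).
  rewrite xm1 asinN1 (asinN (XI t t0)) -mulNr; congr (_ * _); lra.
have x1 : x = 1 by move: xe; rewrite (negPf xn1) => /eqP.
have c0 := c1 x1.
pose h t := ((p + q + t ^+ 2 * p * q) / (gg p q t + 1) - 1 * e) / gg p q t.
have Yh t : 1 - X t = t ^+ 2 * h t.
  by rewrite /h -h_id // HX x1 c0 mulr0 addr0 mulr1.
have := edgeL XI Yh (cvg_h p q (1 * e) p0 q0).
have -> : Num.sqrt (h 0 / 2) *+ 2 = Num.sqrt (p + q - 2 * e).
  rewrite -[RHS]sqrt_half /h gg0 divr1; congr (Num.sqrt _ *+ 2).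
  rewrite expr0n /= !mul0r addr0; fld.
by rewrite x1 asin1.
Unshelve. all: by end_near. Qed.
End Sc3.
Section Vec.
Variable R : realType.
Variable k : nat.
Implicit Types u v w : 'rV[R]_k.

Lemma dotvC u v : dotv u v = dotv v u.
Proof. by rewrite /dotv; apply: eq_bigr => l _; rewrite mulrC. Qed.

Lemma dotv_ge0 u : 0 <= dotv u u.
Proof. by rewrite /dotv; apply: sumr_ge0 => l _; rewrite -expr2 sqr_ge0. Qed.

Lemma dotvDl u v w : dotv (u + v) w = dotv u w + dotv v w.
Proof. by rewrite /dotv -big_split; apply: eq_bigr => l _; rewrite !mxE mulrDl. Qed.

Lemma dotvZl a u w : dotv (a *: u) w = a * dotv u w.
Proof. by rewrite /dotv mulr_sumr; apply: eq_bigr => l _; rewrite !mxE mulrA. Qed.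

Lemma dotvNl u w : dotv (- u) w = - dotv u w.
Proof. by rewrite -scaleN1r dotvZl mulN1r. Qed.

Lemma dotvDr u v w : dotv w (u + v) = dotv w u + dotv w v.
Proof. by rewrite dotvC dotvDl !(dotvC w). Qed.

Lemma dotvZr a u w : dotv w (a *: u) = a * dotv w u.
Proof. by rewrite dotvC dotvZl dotvC. Qed.

Lemma dotvNr u w : dotv w (- u) = - dotv w u.
Proof. by rewrite dotvC dotvNl dotvC. Qed.

Lemma dotv_exp u v (u' v' : 'rV[R]_k) t : dotv (u + t *: v) (u' + t *: v') =
  dotv u u' + t * (dotv u v' + dotv v u') + t ^+ 2 * dotv v v'.
Proof. rewrite !dotvDl !dotvDr !dotvZl !dotvZr; ring. Qed.

Lemma dotv_eq0 u : dotv u u = 0 -> u = 0.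
Proof.
move=> H; apply/rowP => l; rewrite mxE.
have : \sum_(j < k) u 0 j * u 0 j == 0 by apply/eqP.
rewrite psumr_eq0; last by move=> j _; rewrite -expr2 sqr_ge0.
move=> /allP /(_ l (mem_index_enum _)) /implyP /(_ isT).
by rewrite mulf_eq0 orbb => /eqP.
Qed.

Lemma dotv_bound w1 w2 (A B : R) : 0 < A -> 0 < B ->
  dotv w1 w1 = A ^+ 2 -> dotv w2 w2 = B ^+ 2 -> -1 <= dotv w1 w2 / (A * B) <= 1.
Proof.
move=> A0 B0 H1 H2.
have e1 := dotv_ge0 (B *: w1 - A *: w2).
have e2 := dotv_ge0 (B *: w1 + A *: w2).
rewrite !dotvDl !dotvDr !dotvNl !dotvNr !dotvZl !dotvZr H1 H2 (dotvC w2 w1) in e1 e2.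
have AB : 0 < A * B by exact: mulr_gt0.
apply/andP; split.
  rewrite ler_pdivlMr //; nra.
rewrite ler_pdivrMr //; nra.
Qed.
End Vec.
Arguments dotvC {R k}.
Arguments dotv_ge0 {R k}.
Arguments dotvDl {R k}.
Arguments dotvZl {R k}.
Arguments dotvNl {R k}.
Arguments dotvDr {R k}.
Arguments dotvZr {R k}.
Arguments dotvNr {R k}.
Arguments dotv_exp {R k}.
Arguments dotv_eq0 {R k}.
Arguments dotv_bound {R k}.
Section Mat.
Variable R : realType.
Variables (n k : nat).
Implicit Types F D : 'M[R]_(n, k).

Lemma gram_dotv F i j : gram F i j = dotv (row i F) (row j F).
Proof. by rewrite /gram mxE /dotv; apply: eq_bigr => l _; rewrite !mxE. Qed.

Lemma row_Fpath F D t i : row i (Fpath F D t) =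
  (enorm (row i F + t *: row i D))^-1 *: (row i F + t *: row i D).
Proof. by apply/rowP => l; rewrite !mxE mulrC. Qed.

Lemma unit_dot F i : enorm (row i F) = 1 -> dotv (row i F) (row i F) = 1.
Proof.
move=> H; rewrite -[LHS]sqr_sqrtr ?dotv_ge0 //.
by rewrite -/(enorm _) H expr1n.
Qed.

Lemma pair_lim F D i j : (forall i, enorm (row i F) = 1) -> tangent F D ->
  (fun t => (asin (gram (Fpath F D t) i j) - asin (gram F i j)) / t) @ 0^'+ -->
  pi / 2 * mu F D i j.
Proof.
move=> HF HD.
set fi := row i F; set fj := row j F; set di := row i D; set dj := row j D.
set x := dotv fi fj; set c := dotv fi dj + dotv di fj; set e := dotv di dj.
set p := dotv di di; set q := dotv dj dj.
have p0 : 0 <= p by exact: dotv_ge0.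
have q0 : 0 <= q by exact: dotv_ge0.
have ui := @unit_dot F i (HF i); have uj := @unit_dot F j (HF j).
have ti : dotv fi di = 0 := HD i.
have tj : dotv fj dj = 0 := HD j.
have ni t : enorm (fi + t *: di) = Num.sqrt (1 + t ^+ 2 * p).
  by rewrite /enorm dotv_exp ui ti dotvC ti addr0 mulr0 addr0.
have nj t : enorm (fj + t *: dj) = Num.sqrt (1 + t ^+ 2 * q).
  by rewrite /enorm dotv_exp uj tj dotvC tj addr0 mulr0 addr0.
have sp t : 0 < Num.sqrt (1 + t ^+ 2 * p).
  by rewrite sqrtr_gt0 ltr_pwDl // mulr_ge0 // sqr_ge0.
have sq t : 0 < Num.sqrt (1 + t ^+ 2 * q).
  by rewrite sqrtr_gt0 ltr_pwDl // mulr_ge0 // sqr_ge0.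
have HX t : gram (Fpath F D t) i j = (x + t * c + t ^+ 2 * e) / gg p q t.
  rewrite gram_dotv !row_Fpath dotvZl dotvZr -/fi -/fj -/di -/dj ni nj dotv_exp.
  rewrite /gg -/x -/e -/c; field.
  by rewrite !gt_eqF.
have XI t : 0 < t -> -1 <= gram (Fpath F D t) i j <= 1.
  move=> _; rewrite gram_dotv !row_Fpath dotvZl dotvZr mulrA -invfM [_ * dotv _ _]mulrC.
  apply: dotv_bound.
  - by rewrite ni.
  - by rewrite nj.
  - by rewrite /enorm sqr_sqrtr // dotv_ge0.
  - by rewrite /enorm sqr_sqrtr // dotv_ge0.
have xI : -1 <= x <= 1.
  have h1 : dotv fi fi = 1 ^+ 2 by rewrite ui expr1n.
  have h2 : dotv fj fj = 1 ^+ 2 by rewrite uj expr1n.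
  have := @dotv_bound R k fi fj 1 1 ltr01 ltr01 h1 h2.
  by rewrite mulr1 divr1.
have c1 : x = 1 -> c = 0.
  move=> x1.
  have ef : fi = fj.
    apply/eqP; rewrite -subr_eq0; apply/eqP; apply: dotv_eq0.
    rewrite dotvDl !dotvDr !dotvNl !dotvNr ui uj (dotvC fj fi) -/x x1; ring.
  by rewrite /c ef tj dotvC -ef ti addr0.
have cm1 : x = -1 -> c = 0.
  move=> x1.
  have ef : fi = - fj.
    apply/eqP; rewrite -addr_eq0; apply/eqP; apply: dotv_eq0.
    rewrite dotvDl !dotvDr ui uj (dotvC fj fi) -/x x1; ring.
  have ef' : fj = - fi by rewrite ef opprK.
  by rewrite /c ef dotvNl tj dotvC ef' dotvNl ti oppr0 addr0.
have H := @scalar_pair R x c e p q (fun t => gram (Fpath F D t) i j) p0 q0 HX XI xI c1 cm1.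
rewrite (gram_dotv F i j) -/fi -/fj -/x.
have pn : pi != 0 :> R by rewrite gt_eqF // pi_gt0.
suff -> : pi / 2 * mu F D i j = (if -1 < x < 1 then c / Num.sqrt (1 - x ^+ 2)
    else if x == -1 then Num.sqrt (p + q + 2 * e) else - Num.sqrt (p + q - 2 * e)) by [].
rewrite /mu (gram_dotv F i j) -/fi -/fj -/x.
move: pn; generalize (pi : R) => P pn.
case: ifPn => xin.
  have s0 : Num.sqrt (1 - x ^+ 2) != 0.
    rewrite gt_eqF // sqrtr_gt0; move: xin => /andP[? ?]; nra.
  rewrite /c (dotvC di fj); fld.
case: ifPn => xm1.
  rewrite /enorm dotvDl !dotvDr (dotvC dj di) -/p -/q -/e.
  have -> : p + e + (e + q) = p + q + 2 * e by ring.
  fld.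
have -> : x == 1.
  move: xI xin xm1 => /andP[a b]; rewrite negb_and -!leNgt => /orP[h|h] hm.
    have ex : x = -1 by lra.
    by rewrite ex eqxx in hm.
  by apply/eqP; lra.
rewrite /enorm dotvDl !dotvDr !dotvNl !dotvNr (dotvC dj di) -/p -/q -/e.
have -> : p - e + (- e - - q) = p + q - 2 * e by ring.
fld.
Qed.
End Mat.
Lemma cvg_sumr (R : realType) (T : Type) (G : set_system T) (FF : Filter G)
  (I : Type) (r : seq I) (P : pred I) (f : I -> T -> R) (l : I -> R) :
  (forall i, f i x @[x --> G] --> l i) ->
  (\sum_(i <- r | P i) f i x) @[x --> G] --> \sum_(i <- r | P i) l i.
Proof.
move=> H; elim: r => [|a r IH].
  rewrite big_nil; under eq_fun do rewrite big_nil; exact: cvg_cst.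
rewrite big_cons; under eq_fun do rewrite big_cons.
case: (P a) => //; exact: cvgD.
Qed.

Lemma sum_sym (R : realType) m (s : 'I_m -> 'I_m -> R) :
  (forall i j, s i j = s j i) -> (forall i, s i i = 0) ->
  \sum_(i < m) \sum_(j < m) s i j = 2 * \sum_(i < m) \sum_(j < m | (i < j)%N) s i j.
Proof.
move=> sy d0.
have e1 i : \sum_(j < m) s i j = \sum_(j < m | (i < j)%N) s i j + \sum_(j < m | (j < i)%N) s i j.
  rewrite (bigID (fun j : 'I_m => (i < j)%N)) /=; congr (_ + _).
  rewrite (bigID (fun j : 'I_m => (j < i)%N)) /=.
  have -> : \sum_(j < m | ~~ (i < j)%N && ~~ (j < i)%N) s i j = 0.
    apply: big1 => j /andP[h1 h2]; have -> : j = i.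
      by apply/val_inj/eqP; rewrite eqn_leq leqNgt h1 leqNgt h2.
    exact: d0.
  rewrite addr0; apply: eq_bigl => j.
  by case: (ltngtP i j).
under eq_bigr do rewrite e1.
rewrite big_split /= mulr2n mulrDl mul1r; congr (_ + _).
rewrite (eq_bigr (fun i : 'I_m => \sum_(j < m) (if (j < i)%N then s i j else 0))); last first.
  by move=> i _; rewrite big_mkcond.
rewrite exchange_big /=; apply: eq_bigr => i _.
rewrite [RHS]big_mkcond; apply: eq_bigr => j _; by rewrite sy.
Qed.

Section Main1.
Variable R : realType.
Variables (n k : nat).
Implicit Types (F D : 'M[R]_(n, k)) (Q : 'M[R]_n).

Lemma dotv00 : dotv (0 : 'rV[R]_k) 0 = 0.
Proof. by rewrite /dotv big1 // => l _; rewrite mxE mul0r. Qed.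

Lemma mu_sym F D i j : mu F D i j = mu F D j i.
Proof.
rewrite /mu !gram_dotv (dotvC (row j F) (row i F)) (addrC (row j D)).
rewrite (addrC (dotv (row j F) (row i D))) /enorm -[row j D - row i D]opprB dotvNl dotvNr opprK.
by [].
Qed.

Lemma mu_diag F D i : (forall i, enorm (row i F) = 1) -> mu F D i i = 0.
Proof.
move=> HF; rewrite /mu gram_dotv unit_dot // ltxx andbF.
rewrite (_ : (1 == -1) = false); last by apply/eqP; lra.
by rewrite eqxx subrr /enorm dotv00 sqrtr0 mulr0 oppr0.
Qed.

Lemma Fpath0 F D : (forall i, enorm (row i F) = 1) -> Fpath F D 0 = F.
Proof.
move=> HF; apply/matrixP => i j; rewrite !mxE mul0r addr0 scale0r addr0 HF.
by rewrite divr1.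
Qed.

Lemma part1 Q F D : Q^T = Q -> (forall i, enorm (row i F) = 1) -> tangent F D ->
  (fun t : R => (Phi Q F D t - Phi Q F D 0) / t) @ 0^'+ --> GD Q F D.
Proof.
move=> HQ HF HD.
have E : (fun t : R => (Phi Q F D t - Phi Q F D 0) / t) = (fun t => 2 / pi *
   \sum_(i < n) \sum_(j < n) Q i j * ((asin (gram (Fpath F D t) i j) - asin (gram F i j)) / t)).
  apply: funext => t.
  rewrite /Phi /frob Fpath0 // -mulrBr -[(2 / pi * _) / t]mulrA; congr (_ * _).
  rewrite -sumrB mulr_suml; apply: eq_bigr => i _.
  rewrite -sumrB mulr_suml; apply: eq_bigr => j _.
  rewrite !mxE; ring.
rewrite E.
have L : (\sum_(i < n) \sum_(j < n) Q i j * ((asin (gram (Fpath F D x) i j) - asin (gram F i j)) / x))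
   @[x --> 0^'+] --> \sum_(i < n) \sum_(j < n) Q i j * (pi / 2 * mu F D i j).
  apply: cvg_sumr => i; apply: cvg_sumr => j.
  by apply: cvgMl_tmp; exact: pair_lim.
have FF : Filter (0 : R)^'+ by typeclasses eauto.
have L2 := cvgMl_tmp (a := 2 / pi) L.
suff V : 2 / pi * \sum_(i < n) \sum_(j < n) Q i j * (pi / 2 * mu F D i j) = GD Q F D.
  by rewrite -V; move: L2; (try move=> /(_ FF)).
have pn : pi != 0 :> R by rewrite gt_eqF // pi_gt0.
have -> : \sum_(i < n) \sum_(j < n) Q i j * (pi / 2 * mu F D i j) =
   pi / 2 * \sum_(i < n) \sum_(j < n) Q i j * mu F D i j.
  rewrite mulr_sumr; apply: eq_bigr => i _; rewrite mulr_sumr; apply: eq_bigr => j _.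
  ring.
rewrite mulrA (_ : 2 / pi * (pi / 2) = 1); last by move: pn; generalize (pi : R) => P pn; fld.
rewrite mul1r sum_sym.
- rewrite /GD /Gpart; congr (_ * _); apply: eq_bigr => i _.
  by apply: eq_bigl => j; rewrite andbT.
- move=> i j; rewrite mu_sym; congr (_ * _).
  by rewrite -{1}HQ mxE.
- by move=> i; rewrite mu_diag // mulr0.
Qed.

End Main1.
Section Norms.
Variable R : realType.
Variable k : nat.
Implicit Types u v : 'rV[R]_k.

Lemma enorm_ge0 u : 0 <= enorm u.
Proof. exact: sqrtr_ge0. Qed.

Lemma enorm_sqr u : enorm u ^+ 2 = dotv u u.
Proof. by rewrite /enorm sqr_sqrtr // dotv_ge0. Qed.

Lemma enormZ (a : R) u : 0 <= a -> enorm (a *: u) = a * enorm u.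
Proof.
move=> a0; rewrite /enorm dotvZl dotvZr mulrA -expr2 sqrtrM ?sqr_ge0 //.
by rewrite sqrtr_sqr ger0_norm.
Qed.

Lemma cauchy u v : dotv u v <= enorm u * enorm v.
Proof.
have A0 := enorm_ge0 u; have B0 := enorm_ge0 v.
have hu := enorm_sqr u; have hv := enorm_sqr v.
have e1 := dotv_ge0 (enorm v *: u - enorm u *: v).
rewrite !dotvDl !dotvDr !dotvNl !dotvNr !dotvZl !dotvZr -hu -hv (dotvC v u) in e1.
case: (ltrP 0 (enorm u * enorm v)) => AB.
  nra.
have AB0 : enorm u * enorm v = 0 by apply/le_anti/andP; split => //; exact: mulr_ge0.
move/eqP: AB0; rewrite mulf_eq0 => /orP[/eqP a0|/eqP b0].
  have u0 : u = 0 by apply: dotv_eq0; rewrite -hu; rewrite a0 expr0n.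
  by rewrite a0 mul0r u0 /dotv big1 // => l _; rewrite mxE mul0r.
have v0 : v = 0 by apply: dotv_eq0; rewrite -hv; rewrite b0 expr0n.
by rewrite b0 mulr0 v0 /dotv big1 // => l _; rewrite mxE mulr0.
Qed.

Lemma enorm_triangle u v : enorm (u + v) <= enorm u + enorm v.
Proof.
have A0 := enorm_ge0 u; have B0 := enorm_ge0 v.
rewrite -(ger0_norm (addr_ge0 A0 B0)) -sqrtr_sqr /enorm ler_sqrt ?sqr_ge0 //.
rewrite dotvDl !dotvDr (dotvC v u) -/(enorm u) -/(enorm v).
have := cauchy u v; rewrite -!enorm_sqr.
rewrite /enorm => c; nra.
Qed.
End Norms.
Arguments enorm_ge0 {R k}. Arguments enorm_sqr {R k}. Arguments enormZ {R k}.
Arguments cauchy {R k}. Arguments enorm_triangle {R k}.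
Section Pairs.
Variable R : realType.
Variables (n k : nat).
Implicit Types (F D : 'M[R]_(n, k)) (Q : 'M[R]_n).

Lemma row_comb D1 D2 (a b : R) i : row i (a *: D1 + b *: D2) = a *: row i D1 + b *: row i D2.
Proof. by apply/rowP => l; rewrite !mxE. Qed.

Lemma row_scale D (a : R) i : row i (a *: D) = a *: row i D.
Proof. by apply/rowP => l; rewrite !mxE. Qed.

Lemma gram_range F i j : (forall i, enorm (row i F) = 1) -> -1 <= gram F i j <= 1.
Proof.
move=> HF; rewrite gram_dotv.
have h1 : dotv (row i F) (row i F) = 1 ^+ 2 by rewrite unit_dot // expr1n.
have h2 : dotv (row j F) (row j F) = 1 ^+ 2 by rewrite unit_dot // expr1n.
have := dotv_bound _ _ _ _ ltr01 ltr01 h1 h2.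
by rewrite mulr1 divr1.
Qed.

Lemma mu_homog F D i j (a : R) : 0 <= a -> mu F (a *: D) i j = a * mu F D i j.
Proof.
move=> a0; rewrite /mu !row_scale.
case: ifP => _.
  rewrite !dotvZr; ring.
case: ifP => _.
  rewrite -scalerDr enormZ //; ring.
case: ifP => _; last by rewrite mulr0.
rewrite -scalerBr enormZ //; ring.
Qed.

Lemma mu_lin F D1 D2 i j (a b : R) : -1 < gram F i j < 1 ->
  mu F (a *: D1 + b *: D2) i j = a * mu F D1 i j + b * mu F D2 i j.
Proof.
move=> h; rewrite /mu h !row_comb !dotvDr !dotvZr; ring.
Qed.

Lemma mu_m1 F D i j : gram F i j = -1 -> mu F D i j = 2 / pi * enorm (row i D + row j D).
Proof.
move=> h; rewrite /mu h ltxx /= eqxx //.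
Qed.

Lemma mu_p1 F D i j : gram F i j = 1 -> mu F D i j = - (2 / pi * enorm (row i D - row j D)).
Proof.
move=> h; rewrite /mu h ltxx andbF.
rewrite (_ : (1 == -1) = false); last by apply/eqP; lra.
by rewrite eqxx.
Qed.

Lemma twopi_ge0 : 0 <= 2 / pi :> R.
Proof. by rewrite divr_ge0 // pi_ge0. Qed.

Lemma mu_m1_ge0 F D i j : gram F i j = -1 -> 0 <= mu F D i j.
Proof. by move=> h; rewrite mu_m1 // mulr_ge0 ?twopi_ge0 ?enorm_ge0. Qed.

Lemma mu_p1_le0 F D i j : gram F i j = 1 -> mu F D i j <= 0.
Proof. by move=> h; rewrite mu_p1 // oppr_le0 mulr_ge0 ?twopi_ge0 ?enorm_ge0. Qed.

Lemma mu_m1_conv F D1 D2 i j (a b : R) : gram F i j = -1 -> 0 <= a -> 0 <= b ->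
  mu F (a *: D1 + b *: D2) i j <= a * mu F D1 i j + b * mu F D2 i j.
Proof.
move=> h a0 b0; rewrite !mu_m1 // !row_comb.
have -> : a *: row i D1 + b *: row i D2 + (a *: row j D1 + b *: row j D2) =
  a *: (row i D1 + row j D1) + b *: (row i D2 + row j D2).
  by apply/rowP => l; rewrite !mxE; ring.
have := enorm_triangle (a *: (row i D1 + row j D1)) (b *: (row i D2 + row j D2)).
rewrite !enormZ // => H.
have := ler_wpM2l twopi_ge0 H.
by rewrite mulrDr !mulrA ![2 / pi * _]mulrC -!mulrA.
Qed.

Lemma mu_p1_conc F D1 D2 i j (a b : R) : gram F i j = 1 -> 0 <= a -> 0 <= b ->
  a * mu F D1 i j + b * mu F D2 i j <= mu F (a *: D1 + b *: D2) i j.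
Proof.
move=> h a0 b0; rewrite !mu_p1 // !row_comb.
have -> : a *: row i D1 + b *: row i D2 - (a *: row j D1 + b *: row j D2) =
  a *: (row i D1 - row j D1) + b *: (row i D2 - row j D2).
  by apply/rowP => l; rewrite !mxE; ring.
have := enorm_triangle (a *: (row i D1 - row j D1)) (b *: (row i D2 - row j D2)).
rewrite !enormZ // => H.
have := ler_wpM2l twopi_ge0 H.
rewrite mulrN !mulrN -opprD lerN2.
by rewrite mulrDr !mulrA ![2 / pi * _]mulrC -!mulrA.
Qed.
End Pairs.
Section Terms.
Variable R : realType.

Lemma pm1_F : ((1 : R) == -1) = false.
Proof. by apply/eqP; lra. Qed.
Lemma mp1_F : ((-1 : R) == 1) = false.
Proof. by apply/eqP; lra. Qed.

Lemma x_cases (x : R) : -1 <= x <= 1 -> [\/ x = 1, x = -1 | -1 < x < 1].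
Proof.
move=> /andP[a b].
case: (eqVneq x 1) => [->|h1]; first by constructor.
case: (eqVneq x (-1)) => [->|h2]; first by constructor.
constructor 3; apply/andP; split; rewrite lt_neqAle ?a ?b; [rewrite eq_sym h2 | rewrite h1] => //.
Qed.

Lemma term_decomp (c x m : R) : -1 <= x <= 1 ->
  c * m = (if `|x| < 1 then c * m else 0) + (if x == Num.sg c then c * m else 0)
        + (if x == - Num.sg c then c * m else 0).
Proof.
move=> xI.
case: (ltrgtP c 0) => hc; last by rewrite hc !mul0r !if_same !addr0.
- rewrite ltr0_sg // opprK.
  case: (@x_cases x xI) => [->|->|xl].
  + by rewrite normr1 ltxx pm1_F eqxx ?add0r ?addr0.
  + by rewrite normrN normr1 ltxx mp1_F eqxx ?add0r ?addr0.
  + by case/andP: (xl) => xa xb; rewrite ltr_norml xl (lt_eqF xb) (gt_eqF xa) !addr0.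
- rewrite gtr0_sg //.
  case: (@x_cases x xI) => [->|->|xl].
  + by rewrite normr1 ltxx pm1_F eqxx ?add0r ?addr0.
  + by rewrite normrN normr1 ltxx mp1_F eqxx ?add0r ?addr0.
  + by case/andP: (xl) => xa xb; rewrite ltr_norml xl (lt_eqF xb) (gt_eqF xa) !addr0.
Qed.
End Terms.
Section Terms2.
Variable R : realType.
Variables (n k : nat).
Implicit Types (F D : 'M[R]_(n, k)).

Lemma term_cav_le0 F D i j (c : R) : gram F i j == Num.sg c -> c * mu F D i j <= 0.
Proof.
move=> /eqP h.
case: (ltrgtP c 0) => hc; last by rewrite hc mul0r.
- rewrite ltr0_sg // in h; apply: mulr_le0_ge0; [exact: ltW | exact: mu_m1_ge0].
- rewrite gtr0_sg // in h; apply: mulr_ge0_le0; [exact: ltW | exact: mu_p1_le0].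
Qed.

Lemma term_vex_ge0 F D i j (c : R) : gram F i j == - Num.sg c -> 0 <= c * mu F D i j.
Proof.
move=> /eqP h.
case: (ltrgtP c 0) => hc; last by rewrite hc mul0r.
- rewrite ltr0_sg // opprK in h; apply: mulr_le0.
    exact: ltW.
  exact: mu_p1_le0.
- rewrite gtr0_sg // in h; apply: mulr_ge0; [exact: ltW | exact: mu_m1_ge0].
Qed.

Lemma term_cav_conc F D1 D2 i j (c a b : R) : gram F i j == Num.sg c -> 0 <= a -> 0 <= b ->
  a * (c * mu F D1 i j) + b * (c * mu F D2 i j) <= c * mu F (a *: D1 + b *: D2) i j.
Proof.
move=> /eqP h a0 b0.
have -> : a * (c * mu F D1 i j) + b * (c * mu F D2 i j) = c * (a * mu F D1 i j + b * mu F D2 i j) by ring.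
case: (ltrgtP c 0) => hc; last by rewrite hc !mul0r.
- rewrite ltr0_sg // in h; apply: ler_wnM2l; [exact: ltW | exact: mu_m1_conv].
- rewrite gtr0_sg // in h; apply: ler_wpM2l; [exact: ltW | exact: mu_p1_conc].
Qed.

Lemma term_vex_conv F D1 D2 i j (c a b : R) : gram F i j == - Num.sg c -> 0 <= a -> 0 <= b ->
  c * mu F (a *: D1 + b *: D2) i j <= a * (c * mu F D1 i j) + b * (c * mu F D2 i j).
Proof.
move=> /eqP h a0 b0.
have -> : a * (c * mu F D1 i j) + b * (c * mu F D2 i j) = c * (a * mu F D1 i j + b * mu F D2 i j) by ring.
case: (ltrgtP c 0) => hc; last by rewrite hc !mul0r.
- rewrite ltr0_sg // opprK in h; apply: ler_wnM2l; [exact: ltW | exact: mu_p1_conc].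
- rewrite gtr0_sg // in h; apply: ler_wpM2l; [exact: ltW | exact: mu_m1_conv].
Qed.

Lemma Gpart_comb Q F P D1 D2 (a b : R) :
  a * Gpart Q F P D1 + b * Gpart Q F P D2 =
  2 * \sum_(i < n) \sum_(j < n | (i < j)%N && P i j)
        (a * (Q i j * mu F D1 i j) + b * (Q i j * mu F D2 i j)).
Proof.
rewrite /Gpart !mulrA (mulrC a 2) (mulrC b 2) -!mulrA -mulrDr; congr (_ * _).
rewrite !mulr_sumr -big_split; apply: eq_bigr => i _.
by rewrite !mulr_sumr -big_split.
Qed.

Lemma Gpart_homog Q F P D (a : R) : 0 <= a -> Gpart Q F P (a *: D) = a * Gpart Q F P D.
Proof.
move=> a0; rewrite /Gpart mulrCA; congr (_ * _).
rewrite mulr_sumr; apply: eq_bigr => i _; rewrite mulr_sumr; apply: eq_bigr => j _.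
rewrite mu_homog //; ring.
Qed.
End Terms2.
Theorem mainTheorem7 (R : realType) (n k : nat) (Q : 'M[R]_n) (F : 'M[R]_(n, k)) :
  Q^T = Q ->
  (forall i : 'I_n, enorm (row i F) = 1) ->
  (forall D : 'M[R]_(n, k), tangent F D ->
     (fun t : R => (Phi Q F D t - Phi Q F D 0) / t) @ 0^'+ --> GD Q F D)
  /\ (forall D : 'M[R]_(n, k), tangent F D ->
        GD Q F D = Glin Q F D + Gcav Q F D + Gvex Q F D)
  /\ linear_on (tangent F) (Glin Q F)
  /\ (forall D, tangent F D -> Gcav Q F D <= 0)
  /\ concave_on (tangent F) (Gcav Q F)
  /\ pos_homogeneous_on (tangent F) (Gcav Q F)
  /\ (forall D, tangent F D -> 0 <= Gvex Q F D)
  /\ convex_on (tangent F) (Gvex Q F)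
  /\ pos_homogeneous_on (tangent F) (Gvex Q F)
  /\ (exists g h : 'M[R]_(n, k) -> R,
        convex_on (tangent F) g /\ convex_on (tangent F) h /\
        forall D, tangent F D -> GD Q F D = g D - h D).
Proof.
move=> HQ HF.
have decomp : forall D : 'M[R]_(n, k), GD Q F D = Glin Q F D + Gcav Q F D + Gvex Q F D.
  move=> D; rewrite /GD /Glin /Gcav /Gvex /Gpart -!mulrDr; congr (_ * _).
  rewrite -!big_split; apply: eq_bigr => i _ /=.
  rewrite [LHS]big_mkcond [X in _ = X + _ + _]big_mkcond.
  rewrite [X in _ = _ + X + _]big_mkcond [X in _ = _ + _ + X]big_mkcond.
  rewrite -!big_split; apply: eq_bigr => j _ /=.
  case: (i < j)%N => /=; last by rewrite !addr0.
  exact: (@term_decomp R (Q i j) (gram F i j) (mu F D i j) (@gram_range R n k F i j HF)).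
have lin : linear_on (tangent F) (Glin Q F).
  move=> D1 D2 a b _ _; rewrite Gpart_comb /Glin /Gpart; congr (_ * _).
  apply: eq_bigr => i _; apply: eq_bigr => j /andP[_ h].
  rewrite mu_lin; last by rewrite -ltr_norml.
  ring.
have cav0 : forall D, tangent F D -> Gcav Q F D <= 0.
  move=> D _; rewrite /Gcav /Gpart; apply: mulr_ge0_le0 => //.
  apply: sumr_le0 => i _; apply: sumr_le0 => j /andP[_ h].
  exact: term_cav_le0.
have conc : concave_on (tangent F) (Gcav Q F).
  move=> D1 D2 l _ _ /andP[l0 l1]; rewrite Gpart_comb /Gcav /Gpart.
  apply: ler_wpM2l => //.
  apply: ler_sum => i _; apply: ler_sum => j /andP[_ h].
  apply: term_cav_conc => //; lra.
have vex0 : forall D, tangent F D -> 0 <= Gvex Q F D.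
  move=> D _; rewrite /Gvex /Gpart; apply: mulr_ge0 => //.
  apply: sumr_ge0 => i _; apply: sumr_ge0 => j /andP[_ h].
  exact: term_vex_ge0.
have conv : convex_on (tangent F) (Gvex Q F).
  move=> D1 D2 l _ _ /andP[l0 l1]; rewrite Gpart_comb /Gvex /Gpart.
  apply: ler_wpM2l => //.
  apply: ler_sum => i _; apply: ler_sum => j /andP[_ h].
  apply: term_vex_conv => //; lra.
split; first by move=> D HD; exact: part1.
split; first by move=> D _; exact: decomp.
split; first exact: lin.
split; first exact: cav0.
split; first exact: conc.
split; first by move=> D a _ a0; exact: Gpart_homog.
split; first exact: vex0.
split; first exact: conv.
split; first by move=> D a _ a0; exact: Gpart_homog.
exists (fun D => Glin Q F D + Gvex Q F D), (fun D => - Gcav Q F D).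
split.
  move=> D1 D2 l T1 T2 lI; rewrite lin //.
  have := conv D1 D2 l T1 T2 lI; lra.
split.
  move=> D1 D2 l T1 T2 lI.
  have := conc D1 D2 l T1 T2 lI; lra.
by move=> D _; rewrite decomp; ring.
Qed.
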